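(* If $V\subset\mathcal{A}_0$ is compact, then $(\mathrm{bor}(V))^*=V^*$.
   Context: $D=\{z:|z|<1\}$, $\overline D$ its closure. $\mathcal{A}$ is the space of functions $f(z)=\sum_{k\ge0}a_k(f)z^k$ analytic in $D$, with the topology of locally uniform convergence; $\mathcal{A}_0=\{f\in\mathcal{A}: a_0(f)=1\}$. The Hadamard product is $(f*g)(z)=\sum_{k\ge0}a_k(f)a_k(g)z^k$. For $W\subset\mathcal{A}_0$, $W^*=\{g\in\mathcal{A}_0:(f*g)(z)\ne0 \ \forall z\in D,\ \forall f\in W\}$. For $x\in\overline D$, $(P_xf)(z)=f(xz)$. Let $e\equiv1$. If $V\ne\{e\}$, an element $f\in V$ is a border element of $V$ if whenever $f=P_xg$ with $g\in V$, $x\in\overline D$, then $|x|=1$; $\mathrm{bor}(V)$ is the set of border elements. If $V=\{e\}$, $\mathrm{bor}(V)=\{e\}$. *)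

(* Defs.v *)
From HB Require Import structures.
From mathcomp Require Import all_boot all_order all_algebra.
From mathcomp Require Import complex.
From mathcomp Require Import all_classical all_reals all_analysis.
Set Implicit Arguments. Unset Strict Implicit. Unset Printing Implicit Defensive.
Import Order.TTheory GRing.Theory Num.Theory.
Import numFieldNormedType.Exports.
Local Open Scope classical_set_scope.
Local Open Scope ring_scope.
Local Open Scope complex_scope.

Section Defs.
Variable R : realType.
Local Notation C := R[i].

(* An element f = sum a_k z^k of the space A is represented by its coefficient
   sequence a : nat -> C; membership in A means the power series converges at
   every z in the open unit disk D (i.e. radius of convergence >= 1). *)
Definition psum (a : nat -> C) (z : C) : nat -> C :=
  series (fun k => a k * z ^+ k).

Definition tendsto (u : nat -> C) (l : C) : Prop :=
  forall eps : R, 0 < eps -> exists N : nat, forall n, (N <= n)%N -> `|u n - l| < eps%:C.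

Definition hasval (a : nat -> C) (z : C) (l : C) : Prop := tendsto (psum a z) l.

Definition inA (a : nat -> C) : Prop :=
  forall z : C, `|z| < 1 -> exists l, hasval a z l.

Definition A0 : set (nat -> C) := [set a | inA a /\ a 0%N = 1].

Definition hadamard (a b : nat -> C) : nat -> C := fun k => a k * b k.

Definition dual (W : set (nat -> C)) : set (nat -> C) :=
  [set g | A0 g /\ forall f, W f -> forall (z l : C), `|z| < 1 -> hasval (hadamard f g) z l -> l != 0].

(* (P_x f)(z) = f(xz): coefficients a_k x^k *)
Definition Pop (x : C) (a : nat -> C) : nat -> C := fun k => a k * x ^+ k.

Definition eA : nat -> C := fun k => if k is 0%N then 1 else 0.

Definition bor (V : set (nat -> C)) : set (nat -> C) :=
  [set f | (V = [set eA] /\ f = eA) \/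
            (V <> [set eA] /\ V f /\ forall (g : nat -> C) (x : C), V g -> `|x| <= 1 ->
                  f = Pop x g -> `|x| = 1)].

(* Topology of locally uniform convergence on A: U (a subset of A) is open iff
   around each of its points it contains a basic neighbourhood
   {g in A : |g(z) - f(z)| < eps for all |z| <= r}, with 0 <= r < 1, eps > 0. *)
Definition openA (U : set (nat -> C)) : Prop :=
  U `<=` inA /\
  forall f, U f -> exists r : R, exists eps : R, [/\ 0 <= r, r < 1, 0 < eps &
     forall g, inA g -> (forall z lg lf : C, `|z| <= r%:C -> hasval g z lg -> hasval f z lf ->
                  `|lg - lf| < eps%:C) -> U g].

Definition compactA (V : set (nat -> C)) : Prop :=
  V `<=` inA /\
  forall F : set (set (nat -> C)), (forall U, F U -> openA U) ->
    V `<=` \bigcup_(U in F) U ->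
    exists s : seq (set (nat -> C)), (forall U, U \in s -> F U) /\
      V `<=` \bigcup_(U in [set U | U \in s]) U.

End Defs.

(* Main.v *)
Require Import Defs.
From HB Require Import structures.
From mathcomp Require Import all_boot all_order all_algebra.
From mathcomp Require Import complex.
From mathcomp Require Import all_classical all_reals all_analysis.
From mathcomp Require Import ring lra.
Import numFieldNormedType.Exports.
Local Open Scope classical_set_scope.
Set Implicit Arguments. Unset Strict Implicit. Unset Printing Implicit Defensive.
Section Aux.
Import Order.TTheory GRing.Theory Num.Theory.
Local Open Scope ring_scope.
Local Open Scope complex_scope.
Variable R : realType.
Local Notation C := R[i].

Definition nm (z : C) : R := ComplexField.Normc.normc z.
Lemma nC (z : C) : `|z| = (nm z)%:C. Proof. reflexivity. Qed.

Lemma nm_ge0 z : 0 <= nm z.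
Proof. by rewrite -ler0c -nC normr_ge0. Qed.
Lemma nmM x y : nm (x * y) = nm x * nm y.
Proof. by apply: complexI; rewrite rmorphM /= -!nC normrM. Qed.
Lemma nmX x k : nm (x ^+ k) = nm x ^+ k.
Proof. by apply: complexI; rewrite rmorphXn /= -!nC normrX. Qed.
Lemma nmD x y : nm (x + y) <= nm x + nm y.
Proof. by rewrite -lecR rmorphD /= -!nC ler_normD. Qed.
Lemma nmN x : nm (- x) = nm x.
Proof. by apply: complexI; rewrite -!nC normrN. Qed.
Lemma nmB x y : nm (x - y) = nm (y - x).
Proof. by rewrite -nmN opprB. Qed.
Lemma nm_eq0 z : nm z = 0 -> z = 0.
Proof. move=> h; apply/eqP; rewrite -normr_eq0 nC h //. Qed.
Lemma nm0 : nm 0 = 0.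
Proof. by apply: complexI; rewrite -nC normr0. Qed.
Lemma nm1 : nm 1 = 1.
Proof. by apply: complexI; rewrite -nC normr1. Qed.
Lemma nmR (t : R) : nm t%:C = `|t|.
Proof. by apply: complexI; rewrite -nC; rewrite normc_def /= expr0n /= addr0 sqrtr_sqr. Qed.
Lemma nm_tri x y z : nm (x - z) <= nm (x - y) + nm (y - z).
Proof. by rewrite -[x - z](subrKA y) nmD. Qed.

Lemma series0 (V : zmodType) (u : nat -> V) : series u 0 = 0.
Proof. by rewrite seriesEnat /= big_geq. Qed.

Lemma nm_series (u : nat -> C) n : nm (series u n) <= series (fun k => nm (u k)) n.
Proof.
elim: n => [|n ih]; first by rewrite !series0 nm0.
rewrite !seriesSr; apply: le_trans (nmD _ _) _; lra.
Qed.

Lemma series_le (u v : nat -> R) n : (forall k, u k <= v k) -> series u n <= series v n.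
Proof.
move=> h; elim: n => [|n ih]; first by rewrite !series0.
rewrite !seriesSr; have := h n; lra.
Qed.

Lemma series_ge0 (u : nat -> R) n : (forall k, 0 <= u k) -> 0 <= series u n.
Proof.
move=> h; elim: n => [|n ih]; first by rewrite !series0.
rewrite !seriesSr; have := h n; lra.
Qed.

Lemma series_term (u : nat -> R) n k : (forall k, 0 <= u k) -> (k < n)%N -> u k <= series u n.
Proof.
move=> h; elim: n => [//|n ih]; rewrite ltnS leq_eqVlt => /orP[/eqP ->|/ih].
  by rewrite seriesSr; have := series_ge0 n h; lra.
by rewrite seriesSr; have := h n; lra.
Qed.

Lemma geo_bound (q : R) n : 0 <= q < 1 -> series (fun k => q ^+ k) n <= (1 - q)^-1.
Proof.
move=> /andP[q0 q1].
have e : (1 - q) * series (fun k => q ^+ k) n = 1 - q ^+ n.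
  elim: n => [|n ih]; first by rewrite series0 expr0; lra.
  by rewrite seriesSr mulrDr ih exprS; ring.
have q1' : 0 < 1 - q by lra.
rewrite -(ler_pM2l q1') e mulrV ?unitfE ?gt_eqF //.
have : 0 <= q ^+ n by rewrite exprn_ge0.
lra.
Qed.

End Aux.
Section Hv.
Import Order.TTheory GRing.Theory Num.Theory.
Local Open Scope ring_scope.
Local Open Scope complex_scope.
Variable R : realType.
Local Notation C := R[i].
Local Notation nm := (@nm R).

Lemma tendstoP (u : nat -> C) l : tendsto u l <->
  forall eps : R, 0 < eps -> exists N : nat, forall n, (N <= n)%N -> nm (u n - l) < eps.
Proof.
rewrite /tendsto; split=> h eps /h [N hN]; exists N => n /hN; by rewrite nC ltcR.
Qed.

Lemma le_eps (x y : R) : (forall e, 0 < e -> x <= y + e) -> x <= y.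
Proof. by move=> h; apply/ler_addgt0Pr => e /h. Qed.

Lemma nm_small (z : C) : (forall e, 0 < e -> nm z <= e) -> z = 0.
Proof.
move=> h; apply: nm_eq0; apply/eqP; rewrite eq_le nm_ge0 andbT.
by apply: le_eps => e /h; rewrite add0r.
Qed.

Lemma tendsto_uniq (u : nat -> C) l1 l2 : tendsto u l1 -> tendsto u l2 -> l1 = l2.
Proof.
move=> /tendstoP h1 /tendstoP h2; apply/eqP; rewrite -subr_eq0; apply/eqP.
apply: nm_small => e e0.
have e2 : 0 < e / 2 by rewrite divr_gt0.
have [N1 hN1] := h1 _ e2; have [N2 hN2] := h2 _ e2.
have := hN1 (maxn N1 N2) (leq_maxl _ _); have := hN2 (maxn N1 N2) (leq_maxr _ _).
have := nm_tri l1 (u (maxn N1 N2)) l2; rewrite (nmB l1 (u _)); lra.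
Qed.

Lemma hv_uniq (a : nat -> C) (z l1 l2 : C) : hasval a z l1 -> hasval a z l2 -> l1 = l2.
Proof. exact: tendsto_uniq. Qed.

Lemma tendsto_bound (u : nat -> C) l : tendsto u l ->
  exists B, forall k, nm (u k.+1 - u k) <= B.
Proof.
move=> /tendstoP /(_ 1 ltr01) [N hN].
exists (2 + series (fun j => nm (u j.+1 - u j)) N) => k.
have s0 := series_ge0 (u := fun j => nm (u j.+1 - u j)) N (fun j => nm_ge0 _).
case: (ltnP k N) => kN.
  have := series_term (u := fun j => nm (u j.+1 - u j)) (fun j => nm_ge0 _) kN; lra.
have h1 := hN k kN; have h2 := hN k.+1 (leqW kN).
have := nm_tri (u k.+1) l (u k); rewrite (nmB l (u k)); lra.
Qed.

Lemma psumS (a : nat -> C) (z : C) n : psum a z n.+1 - psum a z n = a n * z ^+ n.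
Proof. by rewrite /psum seriesSB. Qed.

Lemma coef_bound (a : nat -> C) (s : R) : inA a -> 0 <= s < 1 ->
  exists B, forall k, nm (a k) * s ^+ k <= B.
Proof.
move=> ha /andP[s0 s1].
have [|l hl] := ha s%:C; first by rewrite nC nmR ltcR ger0_norm.
have [B hB] := tendsto_bound hl; exists B => k.
by have := hB k; rewrite psumS nmM nmX nmR ger0_norm.
Qed.

Lemma psum_Pop (x : C) (a : nat -> C) (z : C) : psum (Pop x a) z = psum a (x * z).
Proof.
apply/funext => n; rewrite /psum; congr series; apply/funext => k.
by rewrite /Pop exprMn mulrA.
Qed.

Lemma hv_Pop (x : C) (a : nat -> C) (z l : C) : hasval (Pop x a) z l <-> hasval a (x * z) l.
Proof. by rewrite /hasval psum_Pop. Qed.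

Lemma seriesB' (u v : nat -> C) n : series (fun k => u k - v k) n = series u n - series v n.
Proof.
elim: n => [|n ih]; first by rewrite !series0 subr0.
by rewrite !seriesSr ih; ring.
Qed.

Lemma hv_sub (a b : nat -> C) (z la lb : C) : hasval a z la -> hasval b z lb ->
  hasval (fun k => a k - b k) z (la - lb).
Proof.
move=> /tendstoP ha /tendstoP hb; apply/tendstoP => e e0.
have e2 : 0 < e / 2 by rewrite divr_gt0.
have [N1 hN1] := ha _ e2; have [N2 hN2] := hb _ e2.
exists (maxn N1 N2) => n hn.
have := hN1 n (leq_trans (leq_maxl _ _) hn); have := hN2 n (leq_trans (leq_maxr _ _) hn).
have -> : psum (fun k => a k - b k) z n - (la - lb) =
   (psum a z n - la) - (psum b z n - lb).
  have -> : psum (fun k => a k - b k) z n = psum a z n - psum b z n.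
    rewrite /psum -seriesB'; congr series; apply/funext => k; by rewrite mulrBl.
  ring.
have := nmD (psum a z n - la) (- (psum b z n - lb)); rewrite nmN; lra.
Qed.

Lemma psum_eA (z : C) n : psum (eA R) z n.+1 = 1.
Proof.
elim: n => [|n ih]; first by rewrite /psum seriesSr series0 /eA expr0; ring.
by rewrite /psum seriesSr -/(psum _ _ _) ih /eA mul0r addr0.
Qed.

Lemma hv_eA (z l : C) : hasval (eA R) z l -> l = 1.
Proof.
move=> h; apply: (hv_uniq h); apply/tendstoP => e e0; exists 1%N => n.
by case: n => // n _; rewrite psum_eA subrr nm0.
Qed.

End Hv.
Section Ana.
Import Order.TTheory GRing.Theory Num.Theory.
Local Open Scope ring_scope.
Local Open Scope complex_scope.
Variable R : realType.
Local Notation C := R[i].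
Local Notation nm := (@nm R).

Lemma expmono (a b : R) k : 0 <= a -> a <= b -> a ^+ k <= b ^+ k.
Proof. move=> a0 ab; apply: lerXn2r; rewrite ?nnegrE //; lra. Qed.

Lemma seriesZ' (B : R) (u : nat -> R) n : series (fun k => B * u k) n = B * series u n.
Proof.
elim: n => [|n ih]; first by rewrite !series0 mulr0.
by rewrite !seriesSr ih mulrDr.
Qed.

Lemma series_geoB (u : nat -> R) (B q : R) n : 0 <= B -> 0 <= q < 1 ->
  (forall k, u k <= B * q ^+ k) -> series u n <= B * (1 - q)^-1.
Proof.
move=> B0 hq hu; apply: le_trans (series_le n hu) _.
rewrite seriesZ'; apply: ler_wpM2l => //; exact: geo_bound.
Qed.

Lemma psum_bound (a : nat -> C) (s B q : R) (z : C) n :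
  0 < s -> 0 <= q < 1 -> (forall k, nm (a k) * s ^+ k <= B) -> nm z <= q * s ->
  nm (psum a z n) <= B * (1 - q)^-1.
Proof.
move=> s0 hq hB hz.
have B0 : 0 <= B by have := hB 0%N; rewrite expr0 mulr1; have := nm_ge0 (a 0%N); lra.
apply: le_trans (nm_series _ _) _; apply: series_geoB => // k.
rewrite nmM nmX.
have h1 : nm z ^+ k <= s ^+ k * q ^+ k.
  by rewrite -exprMn; apply: expmono; [exact: nm_ge0 | rewrite mulrC].
apply: le_trans (_ : nm (a k) * (s ^+ k * q ^+ k) <= _).
  by apply: ler_wpM2l => //; exact: nm_ge0.
rewrite mulrA; apply: ler_wpM2r; last exact: hB.
by apply: exprn_ge0; case/andP: hq.
Qed.

Lemma powdiff (w w' : C) k : nm w <= 1/2 -> nm w' <= 1/2 ->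
  nm (w ^+ k - w' ^+ k) <= 8 * (5/8) ^+ k * nm (w - w').
Proof.
move=> hw hw'; elim: k => [|k ih].
  by rewrite !expr0 subrr nm0 mulr1; apply: mulr_ge0 => //; exact: nm_ge0.
have -> : w ^+ k.+1 - w' ^+ k.+1 = w * (w ^+ k - w' ^+ k) + (w - w') * w' ^+ k.
  by rewrite !exprS; ring.
apply: le_trans (nmD _ _) _; rewrite !nmM nmX.
set A := nm (w ^+ k - w' ^+ k); set d := nm (w - w').
have A0 : 0 <= A by exact: nm_ge0.
have d0 : 0 <= d by exact: nm_ge0.
have X0 : 0 <= (5/8 : R) ^+ k by apply: exprn_ge0; lra.
have h1 : nm w * A <= 1/2 * (8 * (5/8) ^+ k * d).
  by apply: ler_pM => //; exact: nm_ge0.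
have h2 : nm w' ^+ k <= (5/8) ^+ k.
  by apply: expmono; [exact: nm_ge0 | lra].
have h3 : d * nm w' ^+ k <= d * (5/8) ^+ k by apply: ler_wpM2l.
rewrite exprS.
have : 0 <= d * (5/8) ^+ k by apply: mulr_ge0.
lra.
Qed.

Lemma lipschitz (a : nat -> C) : inA a -> exists2 L : R, 0 <= L & forall w w' la la',
  nm w <= 1/2 -> nm w' <= 1/2 -> hasval a w la -> hasval a w' la' ->
  nm (la - la') <= L * nm (w - w').
Proof.
move=> ha; have [|B hB] := coef_bound (s := 3/4) ha; first lra.
have B0 : 0 <= B by have := hB 0%N; rewrite expr0 mulr1; have := nm_ge0 (a 0%N); lra.
exists (8 * B * 6); first by rewrite !mulr_ge0.
move=> w w' la la' hw hw' /tendstoP h1 /tendstoP h2.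
set d := nm (w - w'); have d0 : 0 <= d by exact: nm_ge0.
have key : forall n, nm (psum a w n - psum a w' n) <= 8 * B * 6 * d.
  move=> n; rewrite /psum -seriesB'.
  have -> : (fun k => a k * w ^+ k - a k * w' ^+ k) = (fun k => a k * (w ^+ k - w' ^+ k)).
    by apply/funext => k; rewrite mulrBr.
  apply: le_trans (nm_series _ _) _.
  have -> : 8 * B * 6 * d = (8 * B * d) * (1 - 5/6)^-1.
    rewrite (_ : (1 - 5/6 : R) = 6^-1); last by field.
    by rewrite invrK; ring.
  apply: series_geoB; [by rewrite !mulr_ge0 | lra | move=> k].
  rewrite nmM; apply: le_trans (_ : nm (a k) * (8 * (5/8) ^+ k * d) <= _).
    by apply: ler_wpM2l; [exact: nm_ge0 | exact: powdiff].
  have -> : (5/8 : R) ^+ k = (3/4) ^+ k * (5/6) ^+ k by rewrite -exprMn; congr (_ ^+ _); field.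
  have X0 : 0 <= (5/6 : R) ^+ k by apply: exprn_ge0; lra.
  have := hB k; set b := nm (a k) * (3/4) ^+ k => hb.
  have -> : nm (a k) * (8 * ((3 / 4) ^+ k * (5 / 6) ^+ k) * d) = 8 * d * (5/6) ^+ k * b.
    by rewrite /b; ring.
  have -> : 8 * B * d * (5 / 6) ^+ k = 8 * d * (5/6) ^+ k * B by ring.
  by apply: ler_wpM2l => //; rewrite !mulr_ge0.
apply: le_eps => e e0.
have e2 : 0 < e / 2 by rewrite divr_gt0.
have [N1 hN1] := h1 _ e2; have [N2 hN2] := h2 _ e2.
set n := maxn N1 N2.
have := hN1 n (leq_maxl _ _); have := hN2 n (leq_maxr _ _); have := key n.
have := nm_tri la (psum a w n) la'; have := nm_tri (psum a w n) (psum a w' n) la'.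
rewrite (nmB la (psum a w n)); lra.
Qed.

End Ana.
Section Ident.
Import Order.TTheory GRing.Theory Num.Theory.
Local Open Scope ring_scope.
Local Open Scope complex_scope.
Variable R : realType.
Local Notation C := R[i].
Local Notation nm := (@nm R).

Lemma series_shift (V : zmodType) (u : nat -> V) n :
  series u n.+1 = u 0%N + series (fun j => u j.+1) n.
Proof.
elim: n => [|n ih]; first by rewrite seriesSr !series0 add0r addr0.
by rewrite seriesSr ih seriesSr addrA.
Qed.

Lemma seriesMl (x : C) (u : nat -> C) n : series (fun k => x * u k) n = x * series u n.
Proof.
elim: n => [|n ih]; first by rewrite !series0 mulr0.
by rewrite !seriesSr ih mulrDr.
Qed.

Lemma small_lin (X B : R) : 0 <= B -> (forall t, 0 < t -> t <= 1/2 -> X <= B * t) ->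
  forall eps, 0 < eps -> X <= eps.
Proof.
move=> B0 h eps e0.
have B1 : 0 < B + 1 by lra.
have t0 : 0 < eps / (B + 1) by rewrite divr_gt0.
have hBt : B * (eps / (B + 1)) <= eps.
  rewrite mulrA ler_pdivrMr //; rewrite mulrDr mulr1; lra.
case: (lerP (eps / (B + 1)) (1/2)) => ht.
  by apply: le_trans (h _ t0 ht) hBt.
have := h (1/2) ltac:(lra) (lexx _).
have : B * (1/2) <= B * (eps / (B + 1)) by apply: ler_wpM2l => //; exact: ltW.
lra.
Qed.

Lemma identity (c : nat -> C) : inA c ->
  (forall t : R, 0 < t -> t <= 1/2 -> hasval c t%:C 0) -> forall k, c k = 0.
Proof.
move=> hc hz; have [|B hB] := coef_bound (s := 3/4) hc; first lra.
have B0 : 0 <= B by have := hB 0%N; rewrite expr0 mulr1; have := nm_ge0 (c 0%N); lra.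
elim/ltn_ind => k ih.
set e := fun j => c (j + k)%N.
have c0 : forall z m, (m <= k)%N -> psum c z m = 0.
  move=> z; elim => [|m ihm] hm; first by rewrite /psum series0.
  by rewrite /psum seriesSr -/(psum c z m) ihm ?(ltnW hm) // ih // mul0r addr0.
have claim : forall w n, psum c w (n + k) = w ^+ k * psum e w n.
  move=> w; elim => [|n ihn]; first by rewrite add0n c0 // /psum series0 mulr0.
  rewrite addSn /psum !seriesSr -!/(psum _ _ _) ihn mulrDr /e exprD; ring.
set B' := B / (3/4) ^+ k.+1.
have p34 : 0 < (3/4 : R) ^+ k.+1 by apply: exprn_gt0; lra.
have B'0 : 0 <= B' by rewrite divr_ge0 // ltW.
have bnd : forall t : R, 0 < t -> t <= 1/2 -> nm (c k) <= (3 * B') * t.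
  move=> t t0 t2.
  have tk : 0 < t ^+ k by exact: exprn_gt0.
  have conv : forall eps, 0 < eps -> exists N, forall n, (N <= n)%N -> nm (psum e t%:C n) < eps.
    move=> eps ep; have /tendstoP := hz t t0 t2.
    move=> /(_ (eps * t ^+ k)) [|N hN]; first by rewrite mulr_gt0.
    exists N => n hn; have := hN (n + k)%N (leq_trans hn (leq_addr _ _)).
    by rewrite subr0 claim nmM nmX nmR (ger0_norm (ltW t0)) mulrC (ltr_pM2r tk).
  set e' := fun j => e j.+1.
  have hB' : forall j, nm (e' j) * (3/4) ^+ j <= B'.
    move=> j; rewrite /B' ler_pdivlMr // -mulrA -exprD /e' /e.
    by rewrite addnS -addSn; exact: hB.
  have pb : forall n, nm (psum e' t%:C n) <= B' * (1 - 2/3)^-1.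
    move=> n; apply: (psum_bound (s := 3/4)); [by rewrite divr_gt0 | by apply/andP; split; lra | exact: hB' |].
    rewrite nmR (ger0_norm (ltW t0)); lra.
  have e3 : (1 - 2/3 : R)^-1 = 3 by field.
  have split : forall n, psum e t%:C n.+1 = c k + t%:C * psum e' t%:C n.
    move=> n; rewrite /psum series_shift expr0 mulr1 /e add0n -seriesMl.
    by congr (_ + series _ _); apply/funext => j; rewrite exprS /e' /e; ring.
  apply: le_eps => eps ep; have [N hN] := conv eps ep.
  have := hN N.+1 (leqnSn _); rewrite split.
  have := nmD (c k + t%:C * psum e' t%:C N) (- (t%:C * psum e' t%:C N)).
  rewrite nmN addrK nmM nmR (ger0_norm (ltW t0)).
  have := pb N; rewrite e3; have : 0 <= t by exact: ltW.
  move=> t0' pbN; have : t * nm (psum e' t%:C N) <= t * (B' * 3) by apply: ler_wpM2l.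
  lra.
apply: nm_eq0; apply/eqP; rewrite eq_le nm_ge0 andbT.
apply/ler_addgt0Pr => eps ep; rewrite add0r.
apply: (small_lin (B := 3 * B')) => //; first by rewrite mulr_ge0.
Qed.

End Ident.
Section Topo.
Import Order.TTheory GRing.Theory Num.Theory.
Local Open Scope ring_scope.
Local Open Scope complex_scope.
Variable R : realType.
Local Notation C := R[i].
Local Notation nm := (@nm R).

Lemma lt1C (z : C) (r : R) : nm z <= r -> r < 1 -> `|z| < 1.
Proof. by move=> h1 h2; rewrite nC (_ : (1 : C) = 1%:C) // ltcR; lra. Qed.

Definition Ub (h : nat -> C) (r e : R) : set (nat -> C) :=
  [set u | inA u /\ exists2 d : R, 0 < d & forall z lu lh, nm z <= r ->
     hasval u z lu -> hasval h z lh -> nm (lu - lh) + d <= e].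

Lemma Ub_open h r e : 0 <= r -> r < 1 -> openA (Ub h r e).
Proof.
move=> r0 r1; split; first by move=> u [].
move=> u [ua [d d0 hd]]; exists r, (d / 2); split => //; first by rewrite divr_gt0.
move=> g ga hg; split => //; exists (d / 2); first by rewrite divr_gt0.
move=> z lg lh hz hgz hhz.
have [lu hu] := ua z (lt1C hz r1).
have := hd z lu lh hz hu hhz.
have := hg z lg lu; rewrite nC lecR nC ltcR => /(_ hz hgz hu).
have := nm_tri lg lu lh; lra.
Qed.

Lemma Ub_mem h r e : inA h -> r < 1 -> 0 < e -> Ub h r e h.
Proof.
move=> ha r1 e0; split => //; exists e => // z l1 l2 hz h1 h2.
by rewrite (hv_uniq h1 h2) subrr nm0 add0r.
Qed.

Lemma Ub_close h r e u : Ub h r e u -> forall z lu lh, nm z <= r ->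
  hasval u z lu -> hasval h z lh -> nm (lu - lh) < e.
Proof.
move=> [_ [d d0 hd]] z lu lh hz h1 h2; have := hd z lu lh hz h1 h2; lra.
Qed.

Lemma cluster (V : set (nat -> C)) (u : nat -> nat -> C) :
  compactA V -> (forall n, V (u n)) ->
  exists2 g, V g & forall (r e : R) (M : nat), 0 <= r -> r < 1 -> 0 < e ->
    exists n, (M <= n)%N /\ forall z l1 l2, nm z <= r ->
       hasval (u n) z l1 -> hasval g z l2 -> nm (l1 - l2) < e.
Proof.
move=> [VA hV] Vu; apply: contrapT => hno.
have H : forall g, V g -> exists r e M, [/\ 0 <= r, r < 1, 0 < e &
    forall n, (M <= n)%N -> ~ (Ub g r e (u n))].
  move=> g Vg; apply: contrapT => hng; apply: hno; exists g => // r e M r0 r1 e0.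
  apply: contrapT => hnn; apply: hng; exists r, e, M; split => // n hn hU.
  by apply: hnn; exists n; split => //; exact: Ub_close hU.
pose F := [set U : set (nat -> C) | openA U /\ exists M, forall n, (M <= n)%N -> ~ U (u n)].
have [|s [sF sV]] := hV F (fun U FU => FU.1).
  move=> g Vg; have [r [e [M [r0 r1 e0 hM]]]] := H g Vg.
  exists (Ub g r e); last exact: Ub_mem (VA g Vg) r1 e0.
  by split; [exact: Ub_open | exists M].
have : exists M, forall U, U \in s -> forall n, (M <= n)%N -> ~ U (u n).
  elim: s sF {sV} => [|U s ih] sF; first by exists 0%N.
  have [|M2 h2] := ih; first by move=> U' hU'; apply: sF; rewrite in_cons hU' orbT.
  have [_ [M1 h1]] := sF U (mem_head _ _).
  exists (maxn M1 M2) => U'; rewrite in_cons => /orP[/eqP -> | hU'] n hn.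
    exact: h1 (leq_trans (leq_maxl _ _) hn).
  exact: h2 hU' n (leq_trans (leq_maxr _ _) hn).
move=> [M hM]; have [U hU hUM] := sV _ (Vu M).
exact: hM U hU M (leqnn _) hUM.
Qed.

End Topo.
Section Seq.
Import Order.TTheory GRing.Theory Num.Theory.
Local Open Scope ring_scope.
Local Open Scope complex_scope.
Variable R : realType.
Local Notation C := R[i].
Local Notation nm := (@nm R).

Lemma near_ex (P : nat -> Prop) : (\forall n \near \oo, P n) ->
  exists N, forall n, (N <= n)%N -> P n.
Proof. by case=> N _ hN; exists N => n hn; apply: hN. Qed.

Lemma cvg_eps (u : nat -> R) : cvgn u -> exists l : R, forall e : R, 0 < e ->
  exists N, forall n, (N <= n)%N -> `|u n - l| < e.
Proof.
move=> /cvg_ex [l hl]; exists l => e e0.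
move/cvgrPdist_lt: hl => /(_ e e0) /near_ex [N hN].
by exists N => n /hN; rewrite distrC.
Qed.

Lemma natinv_small (e : R) : 0 < e -> exists N : nat, forall n, (N <= n)%N -> n.+1%:R^-1 < e.
Proof.
move=> e0; have := near_infty_natSinv_lt (PosNum e0) => /near_ex [N hN].
by exists N.
Qed.

Lemma incr_ge (f : nat -> nat) : increasing_seq f -> forall n, (n <= f n)%N.
Proof.
move=> hf; elim => [//|n ih].
have : (f n < f n.+1)%N.
  rewrite ltnNge; apply/negP => h.
  have : (f n.+1 <= f n)%O by [].
  by rewrite hf /= ltnn.
by move=> h; apply: leq_ltn_trans ih h.
Qed.

Lemma nm_Cx (u v : R) : nm (Complex u v) = Num.sqrt (u ^+ 2 + v ^+ 2).
Proof. reflexivity. Qed.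

Lemma Re_le (z : C) : `|complex.Re z| <= nm z.
Proof.
case: z => u v; rewrite nm_Cx /= -sqrtr_sqr; apply: ler_wsqrtr.
by rewrite lerDl sqr_ge0.
Qed.

Lemma Im_le (z : C) : `|complex.Im z| <= nm z.
Proof.
case: z => u v; rewrite nm_Cx /= -sqrtr_sqr; apply: ler_wsqrtr.
by rewrite lerDr sqr_ge0.
Qed.

Lemma nm_ReIm (z : C) : nm z <= `|complex.Re z| + `|complex.Im z|.
Proof.
case: z => u v; rewrite nm_Cx /=.
have h0 : 0 <= `|u| + `|v| by rewrite addr_ge0.
have hu : `|u| ^+ 2 = u ^+ 2 := real_normK (num_real u).
have hv : `|v| ^+ 2 = v ^+ 2 := real_normK (num_real v).
have h : u ^+ 2 + v ^+ 2 <= (`|u| + `|v|) ^+ 2.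
  rewrite sqrrD hu hv; have : 0 <= `|u| * `|v| by rewrite mulr_ge0.
  set p := `|u| * `|v|; lra.
apply: le_trans (ler_wsqrtr h) _.
by rewrite sqrtr_sqr ger0_norm.
Qed.

End Seq.
Section Key.
Import Order.TTheory GRing.Theory Num.Theory.
Local Open Scope ring_scope.
Local Open Scope complex_scope.
Variable R : realType.
Local Notation C := R[i].
Local Notation nm := (@nm R).

Lemma Pop1 (f : nat -> C) : Pop 1 f = f.
Proof. by apply/funext => k; rewrite /Pop expr1n mulr1. Qed.

Lemma PopM (x y : C) (h : nat -> C) : Pop x (Pop y h) = Pop (x * y) h.
Proof. by apply/funext => k; rewrite /Pop exprMn; ring. Qed.

Lemma Pop0 (g : nat -> C) : g 0%N = 1 -> Pop 0 g = eA R.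
Proof.
by move=> g0; apply/funext => -[|k]; rewrite /Pop /eA ?expr0 ?mulr1 // expr0n /= mulr0.
Qed.

Lemma nm_le1 (x : C) : `|x| <= 1 <-> nm x <= 1.
Proof. by rewrite nC (_ : (1 : C) = 1%:C) // lecR. Qed.

Lemma nm_lt1 (x : C) : `|x| < 1 <-> nm x < 1.
Proof. by rewrite nC (_ : (1 : C) = 1%:C) // ltcR. Qed.

Lemma nm_sub_Cx (z : C) (a b : R) :
  nm (z - Complex a b) <= `|complex.Re z - a| + `|complex.Im z - b|.
Proof. by case: z => p q; apply: (le_trans (nm_ReIm _)). Qed.

End Key.
Section Key2.
Import Order.TTheory GRing.Theory Num.Theory.
Local Open Scope ring_scope.
Local Open Scope complex_scope.
Variable R : realType.
Local Notation C := R[i].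
Local Notation nm := (@nm R).

Lemma half (e : R) : 0 < e -> exists2 h : R, 0 < h & h + h = e.
Proof. move=> e0; exists (e / 2); [by rewrite divr_gt0 | by field]. Qed.

Lemma key (V : set (nat -> C)) (f : nat -> C) :
  V `<=` A0 (R:=R) -> compactA V -> V f -> f <> eA R ->
  exists h x, [/\ bor V h, nm x <= 1 & f = Pop x h].
Proof.
move=> VA0 cV Vf fne.
have VA : V `<=` inA (R:=R) by move=> g /VA0 [].
pose S := [set t : R | exists g x, [/\ V g, nm x <= 1, f = Pop x g & t = nm x]].
have S1 : S 1 by exists f, 1; split => //; rewrite ?nm1 ?Pop1.
have Slb : has_lbound S by exists 0 => t [g [x [_ _ _ ->]]]; exact: nm_ge0.
have Sinf : has_inf S by split => //; exists 1.
set m := inf S.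
have mlb : forall t, S t -> m <= t by move=> t St; exact: ge_inf Slb t St.
have hseq : forall n : nat, exists p : (nat -> C) * C,
   [/\ V p.1, nm p.2 <= 1, f = Pop p.2 p.1 & nm p.2 < m + n.+1%:R^-1].
  move=> n; have [|t [g [x [Vg x1 fg ->]]] tm] := inf_adherent (E := S) (eps := n.+1%:R^-1) _ Sinf.
    by rewrite invr_gt0 ltr0Sn.
  by exists (g, x).
clearbody m.
have [P hP] := choice hseq.
pose G n := (P n).1; pose X n := (P n).2.
have XG : forall n, [/\ V (G n), nm (X n) <= 1, f = Pop (X n) (G n) & nm (X n) < m + n.+1%:R^-1].
  by move=> n; case: (hP n).
clearbody G X.
have VG : forall n, V (G n) by move=> n; case: (XG n).
have bR : bounded_fun (fun n => complex.Re (X n)).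
  exists 1; split; first exact: num_real.
  move=> M M1 y _; have [_ x1 _ _] := XG y.
  by have := Re_le (X y) => hh /=; lra.
have [phi1 inc1 cv1] := bolzano_weierstrass bR.
have bI : bounded_fun (fun n => complex.Im (X (phi1 n))).
  exists 1; split; first exact: num_real.
  move=> M M1 y _; have [_ x1 _ _] := XG (phi1 y).
  by have := Im_le (X (phi1 y)) => hh /=; lra.
have [phi2 inc2 cv2] := bolzano_weierstrass bI.
have [a ha] := cvg_eps cv1; have [b hb] := cvg_eps cv2.
pose psi n := phi1 (phi2 n).
have psi_ge : forall n, (n <= psi n)%N.
  by move=> n; apply: leq_trans (incr_ge inc2 n) (incr_ge inc1 _).
pose x := Complex a b.
have xconv : forall e : R, 0 < e -> exists N, forall n, (N <= n)%N -> nm (X (psi n) - x) < e.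
  move=> e e0; have e2 : 0 < e / 2 by rewrite divr_gt0.
  have [N1 h1] := ha _ e2; have [N2 h2] := hb _ e2.
  exists (maxn N1 N2) => n hn.
  have := h1 (phi2 n) (leq_trans (leq_trans (leq_maxl _ _) hn) (incr_ge inc2 n)).
  have := h2 n (leq_trans (leq_maxr _ _) hn).
  have := nm_sub_Cx (X (psi n)) a b; rewrite /psi /=; lra.
clearbody x psi.
have xle : nm x <= m /\ nm x <= 1.
  suff H : forall e, 0 < e -> nm x <= m + e /\ nm x <= 1 + e.
    by split; apply: le_eps => e /H [].
  move=> e e0; have [h h0 hh] := half e0.
  have [N0 hN0] := natinv_small h0; have [N1 hN1] := xconv _ h0.
  set n := maxn N0 N1.
  have : (psi n).+1%:R^-1 < h :> R := hN0 (psi n) (leq_trans (leq_maxl _ _) (psi_ge n)).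
  have := hN1 n (leq_maxr _ _).
  have [_ x1 _ xm] := XG (psi n).
  have := nmD (x - X (psi n)) (X (psi n)); rewrite subrK (nmB x).
  move=> p1 p2 p3; set D := nm (X (psi n) - x) in p1 p2.
  set T := (psi n).+1%:R^-1 in xm p3; clearbody T.
  by split; lra.
have [xm x1] := xle.
have [g Vg gcl] := @cluster R V (fun n => G (psi n)) cV (fun n => VG (psi n)).
have ga := VA g Vg; have fa := VA f Vf.
have [L L0 hL] := lipschitz ga.
have vals : forall z, nm z <= 1/2 -> forall lf lg, hasval f z lf -> hasval g (x * z) lg -> lf = lg.
  move=> z hz lf lg hf hg; apply/eqP; rewrite -subr_eq0; apply/eqP; apply: nm_small => e e0.
  have [h h0 hh] := half e0.
  have L1 : 0 < L + 1 by lra.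
  have [d d0 Ld] : exists2 d : R, 0 < d & L * d <= h.
    exists (h / (L + 1)); first by rewrite divr_gt0.
    rewrite mulrA ler_pdivrMr // mulrDr mulr1 mulrC; have := ltW h0; lra.
  have [N1 hN1] := xconv _ d0.
  have [||n [hn hcl]] := gcl (1/2) h N1 _ _ h0; [lra | lra | idtac].
  have [_ xn1 fn _] := XG (psi n).
  set w := X (psi n) * z; set w' := x * z.
  have z0 := nm_ge0 z.
  have hw : nm w <= 1/2.
    rewrite /w nmM; have : nm (X (psi n)) * nm z <= 1 * (1/2).
      by apply: ler_pM => //; exact: nm_ge0.
    lra.
  have hw' : nm w' <= 1/2.
    rewrite /w' nmM; have : nm x * nm z <= 1 * (1/2).
      by apply: ler_pM => //; exact: nm_ge0.
    lra.
  have hf' : hasval (G (psi n)) w lf by apply/hv_Pop; rewrite -fn.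
  have h12 : (1/2 : R) < 1 by lra.
  have [l2 h2] := ga w (lt1C hw h12).
  have c1 := hcl w lf l2 hw hf' h2.
  have c2 := hL w w' l2 lg hw hw' h2 hg.
  have c3 : nm (w - w') <= d.
    rewrite /w /w' -mulrBl nmM.
    have := hN1 n hn; have := nm_ge0 (X (psi n) - x) => p0 p1.
    have : nm (X (psi n) - x) * nm z <= d * 1 by apply: ler_pM => //; lra.
    lra.
  have c4 : L * nm (w - w') <= L * d by apply: ler_wpM2l.
  have := nm_tri lf l2 lg; lra.
have fx : f = Pop x g.
  have hc : inA (fun k => f k - Pop x g k).
    move=> z hz; have [lf hf] := fa z hz.
    have hxz : `|x * z| < 1.
      apply/nm_lt1; rewrite nmM; move/nm_lt1: hz => hz'.
      have : nm x * nm z <= 1 * nm z by apply: ler_wpM2r => //; exact: nm_ge0.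
      lra.
    have [lg hg] := ga (x * z) hxz.
    by exists (lf - lg); apply: hv_sub hf _; apply/hv_Pop.
  have hid := identity hc.
  apply/funext => k; apply/eqP; rewrite -subr_eq0; apply/eqP; apply: hid => t t0 t2.
  have hz : nm t%:C <= 1/2 by rewrite nmR ger0_norm // ltW.
  have h12 : (1/2 : R) < 1 by lra.
  have hxz : nm (x * t%:C) <= 1/2.
    rewrite nmM; have : nm x * nm t%:C <= 1 * (1/2).
      by apply: ler_pM => //; exact: nm_ge0.
    lra.
  have [lf hf] := fa t%:C (lt1C hz h12).
  have [lg hg] := ga (x * t%:C) (lt1C hxz h12).
  have e := vals _ hz _ _ hf hg.
  rewrite -(subrr lf) {2}e; apply: hv_sub hf _; exact/hv_Pop.
have xpos : 0 < nm x.
  rewrite lt_neqAle nm_ge0 andbT; apply/eqP => h0.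
  apply: fne; rewrite fx (nm_eq0 (esym h0)); apply: Pop0.
  by have [_ ] := VA0 g Vg.
exists g, x; split => //.
right; split.
  by move=> VE; apply: fne; move: Vf; rewrite VE.
split => // h y Vh /nm_le1 hy gy.
have Sxy : S (nm (x * y)).
  exists h, (x * y); split => //.
    rewrite nmM; have := nm_ge0 x; have := nm_ge0 y; nra.
  by rewrite fx gy PopM.
have := mlb _ Sxy; rewrite nmM => hm.
have ny : nm y = 1.
  apply/eqP; rewrite eq_le hy /=.
  have := nm_ge0 y; nra.
by rewrite nC ny.
Qed.

End Key2.
Section Main.
Import Order.TTheory GRing.Theory Num.Theory.
Local Open Scope ring_scope.
Local Open Scope complex_scope.

Lemma corollary3_aux (R : realType) (V : set (nat -> R[i])) :
  V `<=` A0 (R:=R) -> compactA V -> dual (bor V) = dual V.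
Proof.
move=> VA0 cV.
have borV : bor V `<=` V.
  move=> f; rewrite /bor /= => -[[VE ->]|[_ [Vf _]]] //.
  by rewrite VE.
have [VE|VnE] := pselect (V = [set eA R]).
  have -> : bor V = V.
    apply/seteqP; split => // f Vf; rewrite /bor /=; left; split => //.
    by move: Vf; rewrite VE.
  by [].
apply/seteqP; split => g [gA0 hg]; split => //; last first.
  by move=> f /borV Vf; exact: hg.
move=> f Vf z l hz hl.
have [fe|fne] := pselect (f = eA R).
  have he : hadamard f g = eA R.
    apply/funext => -[|k]; rewrite /hadamard fe /eA; first by rewrite gA0.2 mulr1.
    by rewrite mul0r.
  by rewrite he in hl; rewrite (hv_eA hl) oner_neq0.
have [h [x [bh x1 fx]]] := key VA0 cV Vf fne.
have e : hadamard f g = Pop x (hadamard h g).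
  by apply/funext => k; rewrite fx /hadamard /Pop; ring.
rewrite e in hl; move/hv_Pop: hl => hl.
apply: (hg h bh (x * z) l _ hl).
apply/nm_lt1; rewrite nmM; move/nm_lt1: hz => hz'.
have : nm x * nm z <= 1 * nm z by apply: ler_wpM2r => //; exact: nm_ge0.
lra.
Qed.

End Main.

Unset Implicit Arguments.
Theorem corollary3 (R : realType) (V : set (nat -> R[i])) :
  V `<=` A0 (R:=R) -> compactA V -> dual (bor V) = dual V.
Proof. exact: corollary3_aux. Qed.
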